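(* Consider the GBDF4 coefficients $(a_0,\dots,a_3)=\big(\tfrac{2\beta^3+9\beta^2+11\beta+3}{12},\tfrac{-6\beta^3-21\beta^2-9\beta+13}{12},\tfrac{6\beta^3+15\beta^2-3\beta-5}{12},\tfrac{-2\beta^3-3\beta^2+\beta+1}{12}\big)$, $(b_0,\dots,b_4)=\big(\tfrac{\beta^3+3\beta^2+2\beta}{6},\tfrac{-\beta^3-2\beta^2+\beta+2}{2},\tfrac{\beta^3+\beta^2-2\beta}{2},\tfrac{\beta-\beta^3}{6},0\big)$, $(c_0,\dots,c_3)=\big(\tfrac{\beta^3+6\beta^2+11\beta+6}{6},\tfrac{-\beta^3-5\beta^2-6\beta}{2},\tfrac{\beta^3+4\beta^2+3\beta}{2},\tfrac{-\beta^3-3\beta^2-2\beta}{6}\big)$. For $\beta\ge1$, $$\sigma_{\mathrm{F}}\ge1,\quad\sigma_{\mathrm{E}}\ge\frac{4\beta^3+18\beta^2+20\beta+3}{4(\beta^3+3\beta^2+\beta-1)},\quad\lambda_{\mathrm{I}}\le\frac{4\beta^3+6\beta^2-4\beta-3}{4(\beta^3+3\beta^2+\beta-1)},$$ so that $\mathfrak{I}_{\mathrm{IE}}\le\dfrac{4\beta^3+6\beta^2-4\beta-3}{4\beta^3+18\beta^2+20\beta+3}$. If $\beta=9$, then $\sigma_{\mathrm{F}}\le\frac{49}{45}$, $\sigma_{\mathrm{E}}\le\frac{2319}{1960}$, $\lambda_{\mathrm{I}}\ge\frac{1641}{1960}$, so that $\mathfrak{I}_{\mathrm{IE}}\ge\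frac{547}{773}$.
   Context: For coefficient vectors $(a_j)_{j=0}^{\mathrm{k}-1}$, $(b_j)_{j=0}^{\mathrm{k}}$, $(c_j)_{j=0}^{\mathrm{k}-1}$ define $a(\theta)=\sum_j a_je^{\imath j\theta}$, $b(\theta)=\sum_j b_je^{\imath j\theta}$, $c(\theta)=\sum_jc_je^{\imath j\theta}$ and $\sigma_{\mathrm{F}}=\max_{\theta\in[0,2\pi)}|1/a(\theta)|$, $\sigma_{\mathrm{E}}=\max_{\theta\in[0,2\pi)}|c(\theta)/a(\theta)|$, $\lambda_{\mathrm{I}}=\min_{\theta\in[0,2\pi)}\Re[b(\theta)/a(\theta)]$, $\mathfrak{I}_{\mathrm{IE}}=\lambda_{\mathrm{I}}/\sigma_{\mathrm{E}}$. Here $\mathrm{k}=4$. *)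

(* Defs.v *)
From Stdlib Require Import Reals List.
Import ListNotations.
From Coquelicot Require Import Coquelicot.
Open Scope R_scope.

Definition Cexpi (t : R) : C := (cos t, sin t).

Fixpoint trig_poly_aux (l : list R) (j : nat) (theta : R) : C :=
  match l with
  | nil => RtoC 0
  | x :: l' => Cplus (Cmult (RtoC x) (Cexpi (INR j * theta)))
                     (trig_poly_aux l' (S j) theta)
  end.

Definition trig_poly (l : list R) (theta : R) : C := trig_poly_aux l 0 theta.

Definition IsMaxOn (f : R -> R) (m : R) : Prop :=
  (exists t, 0 <= t < 2 * PI /\ f t = m) /\
  (forall t, 0 <= t < 2 * PI -> f t <= m).

Definition IsMinOn (f : R -> R) (m : R) : Prop :=
  (exists t, 0 <= t < 2 * PI /\ f t = m) /\
  (forall t, 0 <= t < 2 * PI -> m <= f t).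

Definition gbdf4_a (b : R) : list R :=
  [ (2*b^3 + 9*b^2 + 11*b + 3) / 12 ;
    (-6*b^3 - 21*b^2 - 9*b + 13) / 12 ;
    (6*b^3 + 15*b^2 - 3*b - 5) / 12 ;
    (-2*b^3 - 3*b^2 + b + 1) / 12 ].

Definition gbdf4_b (b : R) : list R :=
  [ (b^3 + 3*b^2 + 2*b) / 6 ;
    (-b^3 - 2*b^2 + b + 2) / 2 ;
    (b^3 + b^2 - 2*b) / 2 ;
    (b - b^3) / 6 ;
    0 ].

Definition gbdf4_c (b : R) : list R :=
  [ (b^3 + 6*b^2 + 11*b + 6) / 6 ;
    (-b^3 - 5*b^2 - 6*b) / 2 ;
    (b^3 + 4*b^2 + 3*b) / 2 ;
    (-b^3 - 3*b^2 - 2*b) / 6 ].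

Definition sigmaF_fun (b : R) (t : R) : R :=
  Cmod (Cinv (trig_poly (gbdf4_a b) t)).
Definition sigmaE_fun (b : R) (t : R) : R :=
  Cmod (Cdiv (trig_poly (gbdf4_c b) t) (trig_poly (gbdf4_a b) t)).
Definition lambdaI_fun (b : R) (t : R) : R :=
  Re (Cdiv (trig_poly (gbdf4_b b) t) (trig_poly (gbdf4_a b) t)).

(* Main.v *)
Require Import Defs.
From Stdlib Require Import Reals Lra Lia List.
Import ListNotations.
From Coquelicot Require Import Coquelicot.
Open Scope R_scope.

Definition Tc (j : nat) (x : R) : R :=
  match j with 0 => 1 | 1 => x | 2 => 2*x^2-1 | 3 => 4*x^3-3*x
  | 4 => 8*x^4-8*x^2+1 | _ => 0 end.
Definition Uc (j : nat) (x : R) : R :=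
  match j with 0 => 0 | 1 => 1 | 2 => 2*x | 3 => 4*x^2-1
  | 4 => 8*x^3-4*x | _ => 0 end.
Fixpoint ReA (l : list R) (j : nat) (x : R) : R :=
  match l with nil => 0 | a :: l' => a * Tc j x + ReA l' (S j) x end.
Fixpoint ImA (l : list R) (j : nat) (x : R) : R :=
  match l with nil => 0 | a :: l' => a * Uc j x + ImA l' (S j) x end.

Lemma sin_sq (t : R) : sin t ^ 2 = 1 - cos t ^ 2.
Proof. pose proof (sin2_cos2 t). unfold Rsqr in H. lra. Qed.

Lemma Cexpi_step (x t T U : R) :
  Cexpi x = (T, sin t * U) ->
  Cexpi (x + t) = (T * cos t - (1 - cos t ^ 2) * U, sin t * (T + U * cos t)).
Proof.
  unfold Cexpi; intros H; injection H as H1 H2.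
  rewrite cos_plus, sin_plus, H1, H2. f_equal; [|ring].
  replace (T * cos t - sin t * U * sin t) with (T * cos t - sin t ^ 2 * U) by ring.
  rewrite sin_sq; ring.
Qed.

Lemma Cexpi_T (j : nat) (t : R) : (j <= 4)%nat ->
  Cexpi (INR j * t) = (Tc j (cos t), sin t * Uc j (cos t)).
Proof.
  intros Hj.
  assert (H0 : Cexpi (INR 0 * t) = (Tc 0 (cos t), sin t * Uc 0 (cos t))).
  { unfold Cexpi; simpl. replace (0 * t) with 0 by ring. rewrite cos_0, sin_0. f_equal; ring. }
  assert (H1 : Cexpi (INR 1 * t) = (Tc 1 (cos t), sin t * Uc 1 (cos t))).
  { replace (INR 1 * t) with (INR 0 * t + t) by (simpl; ring).
    rewrite (Cexpi_step _ _ _ _ H0). simpl. f_equal; ring. }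
  assert (H2 : Cexpi (INR 2 * t) = (Tc 2 (cos t), sin t * Uc 2 (cos t))).
  { replace (INR 2 * t) with (INR 1 * t + t) by (simpl; ring).
    rewrite (Cexpi_step _ _ _ _ H1). simpl. f_equal; ring. }
  assert (H3 : Cexpi (INR 3 * t) = (Tc 3 (cos t), sin t * Uc 3 (cos t))).
  { replace (INR 3 * t) with (INR 2 * t + t) by (simpl; ring).
    rewrite (Cexpi_step _ _ _ _ H2). simpl. f_equal; ring. }
  assert (H4 : Cexpi (INR 4 * t) = (Tc 4 (cos t), sin t * Uc 4 (cos t))).
  { replace (INR 4 * t) with (INR 3 * t + t) by (simpl; ring).
    rewrite (Cexpi_step _ _ _ _ H3). simpl. f_equal; ring. }
  destruct j as [|[|[|[|[|j]]]]]; auto; lia.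
Qed.

Lemma trig_aux_eq (t : R) : forall l j, (j + length l <= 5)%nat ->
  trig_poly_aux l j t = (ReA l j (cos t), sin t * ImA l j (cos t)).
Proof.
  induction l as [|a l IH]; intros j Hj; simpl.
  - unfold RtoC. f_equal; ring.
  - simpl in Hj. rewrite IH by lia. rewrite Cexpi_T by lia.
    unfold Cplus, Cmult, RtoC; simpl. f_equal; ring.
Qed.

Lemma trig_eq (l : list R) (t : R) : (length l <= 5)%nat ->
  trig_poly l t = (ReA l 0 (cos t), sin t * ImA l 0 (cos t)).
Proof. intros; unfold trig_poly; apply trig_aux_eq; simpl; lia. Qed.

Lemma cmod_inv_eq (X Y : R) : 0 < X^2 + Y^2 ->
  Cmod (Cinv (X, Y)) = sqrt (/ (X^2 + Y^2)).
Proof. intros H. unfold Cmod, Cinv; simpl. f_equal. field. lra. Qed.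

Lemma cmod_div_eq (P Q X Y : R) : 0 < X^2 + Y^2 ->
  Cmod (Cdiv (P, Q) (X, Y)) = sqrt ((P^2 + Q^2) / (X^2 + Y^2)).
Proof. intros H. unfold Cdiv, Cmod, Cinv, Cmult; simpl. f_equal. field. lra. Qed.

Lemma re_div_eq (P Q X Y : R) : 0 < X^2 + Y^2 ->
  Re (Cdiv (P, Q) (X, Y)) = (P * X + Q * Y) / (X^2 + Y^2).
Proof. intros H. unfold Cdiv, Re, Cinv, Cmult; simpl. field. lra. Qed.

Lemma sq_id (X Y c s : R) : s^2 = 1 - c^2 -> X^2 + (s*Y)^2 = X^2 + (1 - c^2) * Y^2.
Proof. intros H. replace ((s*Y)^2) with (s^2*Y^2) by ring. rewrite H; ring. Qed.

Lemma prod_id (X Y P Q c s : R) : s^2 = 1 - c^2 -> P * X + (s*Q) * (s*Y) = P * X + (1 - c^2) * Q * Y.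
Proof. intros H. replace ((s*Q)*(s*Y)) with (s^2*Q*Y) by ring. rewrite H; ring. Qed.

Definition Dp (b x : R) : R := ReA (gbdf4_a b) 0 x ^ 2 + (1 - x^2) * ImA (gbdf4_a b) 0 x ^ 2.
Definition Cp (b x : R) : R := ReA (gbdf4_c b) 0 x ^ 2 + (1 - x^2) * ImA (gbdf4_c b) 0 x ^ 2.
Definition Np (b x : R) : R := ReA (gbdf4_b b) 0 x * ReA (gbdf4_a b) 0 x
  + (1 - x^2) * ImA (gbdf4_b b) 0 x * ImA (gbdf4_a b) 0 x.

Lemma sF_eq (b t : R) : 0 < Dp b (cos t) -> sigmaF_fun b t = sqrt (/ Dp b (cos t)).
Proof.
  intros H. unfold sigmaF_fun. rewrite trig_eq by (simpl; lia).
  rewrite cmod_inv_eq; rewrite (sq_id _ _ (cos t)) by apply sin_sq; [reflexivity | exact H].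
Qed.

Lemma sE_eq (b t : R) : 0 < Dp b (cos t) -> sigmaE_fun b t = sqrt (Cp b (cos t) / Dp b (cos t)).
Proof.
  intros H. unfold sigmaE_fun. rewrite !trig_eq by (simpl; lia).
  rewrite cmod_div_eq; rewrite !(sq_id _ _ (cos t)) by apply sin_sq; [reflexivity | exact H].
Qed.

Lemma lI_eq (b t : R) : 0 < Dp b (cos t) -> lambdaI_fun b t = Np b (cos t) / Dp b (cos t).
Proof.
  intros H. unfold lambdaI_fun. rewrite !trig_eq by (simpl; lia).
  rewrite re_div_eq; rewrite ?(sq_id _ _ (cos t)) by apply sin_sq; [|exact H].
  rewrite (prod_id _ _ _ _ (cos t)) by apply sin_sq. reflexivity.
Qed.

Definition qU (u : R) := (14/9) + (20/3)*u + 7*u^2 + (8/3)*u^3 + (1/3)*u^4.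
Definition rU (u : R) := (25/6) + (190/9)*u + (655/18)*u^2 + (268/9)*u^3 + (227/18)*u^4 + (8/3)*u^5 + (2/9)*u^6.
Definition EU (u : R) := (1322971/2916) + (369070/81)*u^1 + (345383/18)*u^2 + (3659458/81)*u^3 + (21777617/324)*u^4 + (1818934/27)*u^5 + (2541017/54)*u^6 + (627172/27)*u^7 + (872761/108)*u^8 + (52360/27)*u^9 + (2750/9)*u^10 + (256/9)*u^11 + (32/27)*u^12.

Lemma Dp_form (b x : R) : Dp b x = 1 + (1-x)/6 - qU (b-1) * (1-x)^2 + rU (b-1) * (1-x)^3.
Proof. unfold Dp, gbdf4_a, qU, rU; simpl. field. Qed.

Lemma Dp_pos (b x : R) : 1 <= b -> -1 <= x <= 1 -> 0 < Dp b x.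
Proof.
  intros Hb Hx. rewrite Dp_form.
  set (u := b - 1). assert (Hu : 0 <= u) by (unfold u; lra).
  assert (P: forall k, 0 <= u ^ k) by (intros; apply pow_le; lra).
  pose proof (P 1%nat). pose proof (P 2%nat). pose proof (P 3%nat). pose proof (P 4%nat).
  pose proof (P 5%nat). pose proof (P 6%nat). pose proof (P 7%nat). pose proof (P 8%nat).
  pose proof (P 9%nat). pose proof (P 10%nat). pose proof (P 11%nat). pose proof (P 12%nat).
  assert (Hq : 0 < qU u) by (unfold qU; lra).
  assert (Hr : 0 < rU u) by (unfold rU; lra).
  assert (HE : 27 * rU u ^ 2 - 4 * qU u ^ 3 = EU u) by (unfold EU, rU, qU; field).
  assert (HE' : 0 < EU u) by (unfold EU; lra).
  set (q := qU u) in *. set (r := rU u) in *. set (y := 1 - x).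
  assert (Hy : 0 <= y) by (unfold y; lra).
  assert (Hid : 27 * r^2 * (r * y^3 - q * y^2) + 4 * q^3 = (3*r*y - 2*q)^2 * (3*r*y + q)) by ring.
  assert (G1 : 0 <= (3*r*y - 2*q)^2 * (3*r*y + q)).
  { apply Rmult_le_pos. apply pow2_ge_0. nra. }
  assert (Hr2 : 0 < r^2) by nra.
  assert (Hm : 0 < 27 * r^2 * (1 + y/6 - q * y^2 + r * y^3)).
  { assert (0 <= r^2 * y) by nra. nra. }
  nra.
Qed.

Lemma Dp_1 (b : R) : Dp b 1 = 1.
Proof. unfold Dp, gbdf4_a; simpl. field. Qed.

Lemma Dp_m1 (b : R) : Dp b (-1) = (4 * (b^3 + 3*b^2 + b - 1) / 3)^2.
Proof. unfold Dp, gbdf4_a; simpl. field. Qed.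

Lemma Cp_m1 (b : R) : Cp b (-1) = ((4*b^3 + 18*b^2 + 20*b + 3) / 3)^2.
Proof. unfold Cp, gbdf4_c; simpl. field. Qed.

Lemma Np_m1 (b : R) : Np b (-1) = (4 * (b^3 + 3*b^2 + b - 1) / 3) * ((4*b^3 + 6*b^2 - 4*b - 3) / 3).
Proof. unfold Np, gbdf4_a, gbdf4_b; simpl. field. Qed.

Lemma bnd9_F (x : R) : -1 <= x <= 1 -> (45/49)^2 <= Dp 9 x.
Proof.
  intros Hx. assert (H1 : 0 <= (x - 99/100)^2 * (1 - x)) by (apply Rmult_le_pos; [apply pow2_ge_0|lra]).
  assert (H2 : 0 <= (x - 99/100)^2) by apply pow2_ge_0.
  unfold Dp, gbdf4_a; simpl. lra.
Qed.

Lemma bnd9_E (x : R) : -1 <= x <= 1 -> Cp 9 x <= (2319/1960)^2 * Dp 9 x.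
Proof.
  intros Hx. assert (H1 : 0 <= (x - 9647/10000)^2 * (1 - x)) by (apply Rmult_le_pos; [apply pow2_ge_0|lra]).
  assert (H2 : 0 <= (x - 9647/10000)^2) by apply pow2_ge_0.
  unfold Dp, Cp, gbdf4_a, gbdf4_c; simpl. lra.
Qed.

Lemma bnd9_I (x : R) : -1 <= x <= 1 -> 1641/1960 * Dp 9 x <= Np 9 x.
Proof.
  intros Hx. assert (H1 : 0 <= (x - 1931/2000)^2 * (1 - x)) by (apply Rmult_le_pos; [apply pow2_ge_0|lra]).
  assert (H2 : 0 <= (x - 1931/2000)^2) by apply pow2_ge_0.
  unfold Dp, Np, gbdf4_a, gbdf4_b; simpl. lra.
Qed.

Lemma Dp_cont (b : R) : continuity (Dp b).
Proof. unfold Dp, gbdf4_a; simpl. unfold Tc, Uc. reg. Qed.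
Lemma Cp_cont (b : R) : continuity (Cp b).
Proof. unfold Cp, gbdf4_c; simpl. unfold Tc, Uc. reg. Qed.
Lemma Np_cont (b : R) : continuity (Np b).
Proof. unfold Np, gbdf4_a, gbdf4_b; simpl. unfold Tc, Uc. reg. Qed.

Lemma acos_in (x : R) : 0 <= acos x < 2 * PI.
Proof. pose proof (acos_bound x). pose proof PI_RGT_0. lra. Qed.

Lemma cos_in (t : R) : -1 <= cos t <= 1.
Proof. apply COS_bound. Qed.

Theorem mainTheorem8 (beta : R) (Hb : 1 <= beta) :
  exists sF sE lI : R,
    IsMaxOn (sigmaF_fun beta) sF /\
    IsMaxOn (sigmaE_fun beta) sE /\
    IsMinOn (lambdaI_fun beta) lI /\
    sF >= 1 /\
    sE >= (4*beta^3 + 18*beta^2 + 20*beta + 3) / (4 * (beta^3 + 3*beta^2 + beta - 1)) /\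
    lI <= (4*beta^3 + 6*beta^2 - 4*beta - 3) / (4 * (beta^3 + 3*beta^2 + beta - 1)) /\
    lI / sE <= (4*beta^3 + 6*beta^2 - 4*beta - 3) / (4*beta^3 + 18*beta^2 + 20*beta + 3) /\
    (beta = 9 ->
       sF <= 49 / 45 /\ sE <= 2319 / 1960 /\ lI >= 1641 / 1960 /\
       lI / sE >= 547 / 773).
Proof.
  assert (Dpos : forall x, -1 <= x <= 1 -> 0 < Dp beta x) by (intros; apply Dp_pos; auto).
  assert (Dposc : forall t, 0 < Dp beta (cos t)) by (intros; apply Dpos, cos_in).
  assert (Hm1 : -1 <= 1) by lra.
  destruct (continuity_ab_min (Dp beta) (-1) 1 Hm1 (fun c _ => Dp_cont beta c)) as [xF [HF HxF]].
  assert (CE : forall c, -1 <= c <= 1 -> continuity_pt (fun x => Cp beta x / Dp beta x) c).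
  { intros c Hc. apply continuity_pt_div; [apply Cp_cont|apply Dp_cont|].
    specialize (Dpos c Hc); lra. }
  destruct (continuity_ab_maj _ (-1) 1 Hm1 CE) as [xE [HE HxE]].
  assert (CI : forall c, -1 <= c <= 1 -> continuity_pt (fun x => Np beta x / Dp beta x) c).
  { intros c Hc. apply continuity_pt_div; [apply Np_cont|apply Dp_cont|].
    specialize (Dpos c Hc); lra. }
  destruct (continuity_ab_min _ (-1) 1 Hm1 CI) as [xI [HI HxI]].
  cbv beta in HE, HI.
  set (sF := sqrt (/ Dp beta xF)).
  set (sE := sqrt (Cp beta xE / Dp beta xE)).
  set (lI := Np beta xI / Dp beta xI).
  assert (EF : forall t, sigmaF_fun beta t = sqrt (/ Dp beta (cos t))) by (intros; apply sF_eq; auto).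
  assert (EE : forall t, sigmaE_fun beta t = sqrt (Cp beta (cos t) / Dp beta (cos t))) by (intros; apply sE_eq; auto).
  assert (EI : forall t, lambdaI_fun beta t = Np beta (cos t) / Dp beta (cos t)) by (intros; apply lI_eq; auto).
  assert (MF : IsMaxOn (sigmaF_fun beta) sF).
  { split.
    - exists (acos xF). split; [apply acos_in|]. rewrite EF, cos_acos by exact HxF. reflexivity.
    - intros t _. rewrite EF. apply sqrt_le_1_alt. apply Rinv_le_contravar.
      + apply Dpos; exact HxF.
      + apply HF, cos_in. }
  assert (ME : IsMaxOn (sigmaE_fun beta) sE).
  { split.
    - exists (acos xE). split; [apply acos_in|]. rewrite EE, cos_acos by exact HxE. reflexivity.
    - intros t _. rewrite EE. apply sqrt_le_1_alt. apply HE, cos_in. }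
  assert (MI : IsMinOn (lambdaI_fun beta) lI).
  { split.
    - exists (acos xI). split; [apply acos_in|]. rewrite EI, cos_acos by exact HxI. reflexivity.
    - intros t _. rewrite EI. apply HI, cos_in. }
  assert (HPI : 0 <= PI < 2 * PI) by (pose proof PI_RGT_0; lra).
  assert (H02 : 0 <= 0 < 2 * PI) by (pose proof PI_RGT_0; lra).
  set (A := 4 * (beta^3 + 3*beta^2 + beta - 1)).
  set (Ec := 4*beta^3 + 18*beta^2 + 20*beta + 3).
  set (Lc := 4*beta^3 + 6*beta^2 - 4*beta - 3).
  assert (Apos : 0 < A).
  { unfold A. assert (1 <= beta^2) by nra. assert (1 <= beta^3) by nra. lra. }
  assert (Epos : 0 < Ec).
  { unfold Ec. assert (1 <= beta^2) by nra. assert (1 <= beta^3) by nra. lra. }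
  assert (Lpos : 0 < Lc).
  { unfold Lc. assert (beta <= beta^2) by nra. assert (1 <= beta^3) by nra. lra. }
  assert (GF : sF >= 1).
  { apply Rle_ge. destruct MF as [_ MF]. specialize (MF 0 H02).
    rewrite EF, cos_0, Dp_1, Rinv_1, sqrt_1 in MF. exact MF. }
  assert (GE : Ec / A <= sE).
  { destruct ME as [_ ME]. specialize (ME PI HPI).
    rewrite EE, cos_PI, Dp_m1, Cp_m1 in ME.
    replace (((4 * beta ^ 3 + 18 * beta ^ 2 + 20 * beta + 3) / 3) ^ 2 /
      (4 * (beta ^ 3 + 3 * beta ^ 2 + beta - 1) / 3) ^ 2) with ((Ec / A)^2) in ME.
    2:{ unfold Ec, A in *. field. lra. }
    rewrite sqrt_pow2 in ME; [exact ME|].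
    apply Rlt_le, Rdiv_lt_0_compat; assumption. }
  assert (GI : lI <= Lc / A).
  { destruct MI as [_ MI]. specialize (MI PI HPI).
    rewrite EI, cos_PI, Dp_m1, Np_m1 in MI.
    replace (4 * (beta ^ 3 + 3 * beta ^ 2 + beta - 1) / 3 *
      ((4 * beta ^ 3 + 6 * beta ^ 2 - 4 * beta - 3) / 3) /
      (4 * (beta ^ 3 + 3 * beta ^ 2 + beta - 1) / 3) ^ 2) with (Lc / A) in MI.
    2:{ unfold Lc, A in *. field. lra. }
    exact MI. }
  assert (sEpos : 0 < sE) by (assert (0 < Ec / A) by (apply Rdiv_lt_0_compat; assumption); lra).
  exists sF, sE, lI.
  split; [exact MF|]. split; [exact ME|]. split; [exact MI|]. split; [exact GF|].
  split; [apply Rle_ge; exact GE|]. split; [exact GI|]. split.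
  {
    apply (Rmult_le_reg_r sE); [exact sEpos|].
    unfold Rdiv at 1. rewrite Rmult_assoc, Rinv_l, Rmult_1_r by lra.
    apply (Rmult_le_reg_r Ec); [exact Epos|].
    assert (lI * Ec <= Lc / A * Ec) by (apply Rmult_le_compat_r; lra).
    assert (Lc / A * Ec <= Lc / Ec * sE * Ec).
    { replace (Lc / Ec * sE * Ec) with (Lc * sE) by (field; lra).
      replace (Lc / A * Ec) with (Lc * (Ec / A)) by (field; lra).
      apply Rmult_le_compat_l; lra. }
    lra. }
  intros H9. subst beta.
  assert (B1 : sF <= 49/45).
  { unfold sF. rewrite <- (sqrt_pow2 (49/45)) by lra. apply sqrt_le_1_alt.
    replace ((49/45)^2) with (/ ((45/49)^2)) by field.
    apply Rinv_le_contravar; [lra|]. apply bnd9_F; exact HxF. }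
  assert (B2 : sE <= 2319/1960).
  { unfold sE. rewrite <- (sqrt_pow2 (2319/1960)) by lra. apply sqrt_le_1_alt.
    pose proof (bnd9_E xE HxE). pose proof (Dpos xE HxE).
    apply (Rmult_le_reg_r (Dp 9 xE)); [lra|].
    unfold Rdiv. rewrite Rmult_assoc, Rinv_l, Rmult_1_r by lra. lra. }
  assert (B3 : 1641/1960 <= lI).
  { unfold lI. pose proof (bnd9_I xI HxI). pose proof (Dpos xI HxI).
    apply (Rmult_le_reg_r (Dp 9 xI)); [lra|].
    replace (Np 9 xI / Dp 9 xI * Dp 9 xI) with (Np 9 xI) by (field; lra). lra. }
  split; [exact B1|]. split; [exact B2|]. split; [lra|].
  apply Rle_ge.
  apply (Rmult_le_reg_r sE); [exact sEpos|].
  unfold Rdiv at 2. rewrite Rmult_assoc, Rinv_l, Rmult_1_r by lra.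
  assert (547/773 * sE <= 547/773 * (2319/1960)) by (apply Rmult_le_compat_l; lra).
  lra.
Qed.
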